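(* Let $v_{i_1},\dots,v_{i_m}$ be distinct variables. For all $n\in\mathbb{N}$ and all $e,f,g_1,\dots,g_m,h_1,\dots,h_m\in\mathsf{Exp}/{\sim}$: if $e\sim^{(n)}f$ and $g_j\sim^{(n)}h_j$ for all $1\le j\le m$, then $e[(g_1,\dots,g_m)/(v_{i_1},\dots,v_{i_m})]\sim^{(n)}f[(h_1,\dots,h_m)/(v_{i_1},\dots,v_{i_m})]$.
   Context: Fix variables $V=\{v_1,v_2,\dots\}$ and letters $\Sigma$. Expressions: $e\in\mathsf{Exp}::=0\mid v\ (v\in V)\mid a.e\mid e+f\mid\mu v.e$ ($\mu v$ binds $v$); $e[\vec f/\vec v]$ is simultaneous capture-avoiding substitution. The prechart $(\mathsf{Exp},\partial)$: least relations with $a.e\xrightarrow{a}e$; $v\rhd v$; $e+f$ has all transitions and outputs of $e$ and of $f$; $\mu w.e\rhd v$ if $e\rhd v$, $v\ne w$; $\mu v.e\xrightarrow{a}e'[\mu v.e/v]$ if $e\xrightarrow{a}e'$. Bisimilarity $\sim$ on $\mathsf{Exp}$ (largest relation such that related expressions have equal output sets and matching transitions to related expressions) is a congruence for all operations including substitution, so these operations are well defined on $\mathsf{Exp}/{\sim}$, which is a prechart via $[e]\xrightarrow{a}[e']$ iff $e\xrightarrow{a}e'$ and $[e]\rhd v$ iff $e\rhd v$. Stratified bisimilarity on this prechart: $x\sim^{(0)}y$ always; $x\sim^{(k+1)}y$ iff $x,y$ have the same outputs, every $x\xrightarrow{a}x'$ is matched by some $y\xrightarrow{a}y'$ with $x'\sim^{(k)}y'$,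 and symmetrically. *)

(* Defs.v *)
From mathcomp Require Import all_boot.
Set Implicit Arguments. Unset Strict Implicit. Unset Printing Implicit Defensive.

(* Variables V = {v_0, v_1, ...} are represented by their indices (nat);
   letters are an arbitrary type A (the alphabet Sigma). *)
Inductive Exp (A : Type) : Type :=
| Zero : Exp A
| Var : nat -> Exp A
| Act : A -> Exp A -> Exp A
| Plus : Exp A -> Exp A -> Exp A
| Mu : nat -> Exp A -> Exp A.
Arguments Zero {A}.
Arguments Var {A} _.

Section Defs.
Variable A : Type.

Fixpoint fv (e : Exp A) : seq nat :=
  match e with
  | Zero => [::]
  | Var v => [:: v]
  | Act _ e0 => fv e0
  | Plus e1 e2 => fv e1 ++ fv e2
  | Mu w e0 => [seq u <- fv e0 | u != w]
  end.

(* The bound variable of a mu is always renamed to a fresh one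
   (larger than every variable of the body and of the relevant s u),
   so the result is the usual capture-avoiding substitution up to
   alpha-renaming. *)
Fixpoint subst (s : nat -> Exp A) (e : Exp A) : Exp A :=
  match e with
  | Zero => Zero
  | Var v => s v
  | Act a e0 => Act a (subst s e0)
  | Plus e1 e2 => Plus (subst s e1) (subst s e2)
  | Mu w e0 =>
      let z := (foldr maxn w (fv e0 ++ flatten [seq fv (s u) | u <- fv e0])).+1 in
      Mu z (subst (fun u => if u == w then Var z else s u) e0)
  end.

Definition subst1 (v : nat) (f : Exp A) : nat -> Exp A :=
  fun u => if u == v then f else Var u.

Definition substm (m : nat) (i : 'I_m -> nat) (g : 'I_m -> Exp A)
  : nat -> Exp A :=
  fun u => match [pick j | i j == u] with Some j => g j | None => Var u end.

Inductive step : Exp A -> A -> Exp A -> Prop :=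
| st_act a e : step (Act a e) a e
| st_plusl e f a e' : step e a e' -> step (Plus e f) a e'
| st_plusr e f a f' : step f a f' -> step (Plus e f) a f'
| st_mu v e a e' : step e a e' -> step (Mu v e) a (subst (subst1 v (Mu v e)) e').

Inductive out : Exp A -> nat -> Prop :=
| out_var v : out (Var v) v
| out_plusl e f v : out e v -> out (Plus e f) v
| out_plusr e f v : out f v -> out (Plus e f) v
| out_mu w e v : out e v -> v <> w -> out (Mu w e) v.

Definition bisimulation (R : Exp A -> Exp A -> Prop) : Prop :=
  forall e f, R e f ->
    (forall v, out e v <-> out f v) /\
    (forall a e', step e a e' -> exists f', step f a f' /\ R e' f') /\
    (forall a f', step f a f' -> exists e', step e a e' /\ R e' f').

Definition bisim (e f : Exp A) : Prop :=
  exists R, bisimulation R /\ R e f.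

(* The quotient prechart Exp/~, described through representatives:
   [x] -a-> [y] iff some representatives make a transition, and
   [x] |> v iff some representative outputs v. *)
Definition qstep (x : Exp A) (a : A) (y : Exp A) : Prop :=
  exists x' y', bisim x x' /\ bisim y y' /\ step x' a y'.

Definition qout (x : Exp A) (v : nat) : Prop :=
  exists x', bisim x x' /\ out x' v.

(* Stratified bisimilarity on Exp/~ (pulled back to representatives) *)
Fixpoint strat (k : nat) (x y : Exp A) : Prop :=
  match k with
  | 0 => True
  | k'.+1 =>
      (forall v, qout x v <-> qout y v) /\
      (forall a x', qstep x a x' -> exists y', qstep y a y' /\ strat k' x' y') /\
      (forall a y', qstep y a y' -> exists x', qstep x a x' /\ strat k' x' y')
  end.

End Defs.

(* Main.v *)
Require Import Defs.
From mathcomp Require Import all_boot.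
From Stdlib Require Import FunctionalExtensionality PropExtensionality.
Set Implicit Arguments. Unset Strict Implicit.

Lemma out_fv A (x : Exp A) v : out x v -> v \in fv x.
Proof.
elim=> /= {x v}.
- by move=> v; rewrite inE.
- by move=> e f v _ H; rewrite mem_cat H.
- by move=> e f v _ H; rewrite mem_cat H orbT.
- by move=> w e v _ H nw; rewrite mem_filter H andbT; apply/eqP.
Qed.

Lemma fv_subst A (s : nat -> Exp A) e u :
  u \in fv (subst s e) -> exists2 v, v \in fv e & u \in fv (s v).
Proof.
elim: e s => [|v|b e0 IH|e1 IH1 e2 IH2|w e0 IH] s /=.
- by [].
- by move=> H; exists v; rewrite ?inE.
- exact: IH.
- rewrite mem_cat => /orP [H|H].
  + by case: (IH1 _ H) => v Hv Hu; exists v; rewrite // mem_cat Hv.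
  + by case: (IH2 _ H) => v Hv Hu; exists v; rewrite // mem_cat Hv orbT.
- rewrite mem_filter => /andP [uz H].
  case: (IH _ H) => v Hv.
  move=> /= Hu.
  case: (v =P w) => [E|vw].
  + by rewrite E eqxx inE in Hu; rewrite Hu in uz.
  + exists v; last by move: Hu; case: (v =P w).
    by rewrite mem_filter Hv andbT; apply/eqP.
Qed.

Lemma foldr_max_ge (L : seq nat) w x : x \in L -> x <= foldr maxn w L.
Proof.
elim: L => //= y L IH; rewrite inE => /orP [/eqP ->|H].
- exact: leq_maxl.
- exact: leq_trans (IH H) (leq_maxr _ _).
Qed.

Lemma subst_Mu A (s : nat -> Exp A) w e0 : exists z,
  subst s (Mu w e0) = Mu z (subst (fun u => if u == w then Var z else s u) e0)
  /\ (forall v, v \in fv e0 -> forall u, u \in fv (s v) -> u < z).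
Proof.
eexists; split; first reflexivity.
move=> v Hv u Hu; rewrite ltnS; apply: foldr_max_ge.
rewrite mem_cat; apply/orP; right; apply/flatten_mapP; by exists v.
Qed.

Lemma out_inv A (x : Exp A) u : out x u ->
  match x with
  | Zero => False
  | Var v => u = v
  | Act _ _ => False
  | Plus e f => out e u \/ out f u
  | Mu w e => out e u /\ u <> w
  end.
Proof. by case=> *; auto. Qed.

Lemma step_inv A (x : Exp A) a y : step x a y ->
  match x with
  | Zero => False
  | Var v => False
  | Act b e => a = b /\ y = e
  | Plus e f => step e a y \/ step f a y
  | Mu w e => exists e', step e a e' /\ y = subst (subst1 w (Mu w e)) e'
  end.
Proof. by case=> *; eauto. Qed.

Lemma out_subst A (s : nat -> Exp A) e u :
  out (subst s e) u <-> exists v, out e v /\ out (s v) u.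
Proof.
elim: e s u => [|v|b e0 IH|e1 IH1 e2 IH2|w e0 IH] s u.
- by split => [/out_inv|[v [/out_inv]]].
- split => [H|[v' [/out_inv -> H]]] //; exists v; split => //; constructor.
- by split => [/out_inv|[v [/out_inv]]].
- split => [/out_inv [H|H]|[v [/out_inv [H|H] H']]].
  + by case/IH1: H => v [H1 H2]; exists v; split => //; apply: out_plusl.
  + by case/IH2: H => v [H1 H2]; exists v; split => //; apply: out_plusr.
  + by apply: out_plusl; apply/IH1; eauto.
  + by apply: out_plusr; apply/IH2; eauto.
- case: (subst_Mu s w e0) => z [-> Hz].
  split => [/out_inv [/IH [v [H1 H2]] uz]|[v [/out_inv [H1 vw] H2]]].
  + move: H2 => /=; case: (v =P w) => [_ /out_inv //|vw H2].
    by exists v; split => //; apply: out_mu.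
  + apply: out_mu; last first.
      move=> uz; have := Hz v (out_fv H1) u (out_fv H2); by rewrite uz ltnn.
    apply/IH; exists v; split => //=; by case: (v =P w).
Qed.

Lemma step_fv A (x : Exp A) a y : step x a y -> {subset fv y <= fv x}.
Proof.
elim=> /= {x a y}.
- by move=> b e u.
- by move=> e f a e' _ IH u H; rewrite mem_cat IH.
- by move=> e f a e' _ IH u H; rewrite mem_cat IH ?orbT.
- move=> v e a e' _ IH u /fv_subst [v' /IH Hv'].
  rewrite /subst1; case: (v' =P v) => [_ //|nv]; rewrite inE => /eqP ->.
  by rewrite mem_filter Hv' andbT; apply/eqP.
Qed.

Fixpoint Tr (A : Type) (k : nat) : Type :=
  match k with 0 => unit | S k => ((nat -> Prop) * (A -> Tr A k -> Prop))%type end.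

Fixpoint trunc A k : Tr A k.+1 -> Tr A k :=
  match k return Tr A k.+1 -> Tr A k with
  | 0 => fun _ => tt
  | S k => fun T => (T.1, fun a (X : Tr A k) => exists Y : Tr A k.+1, T.2 a Y /\ X = @trunc A k Y)
  end.
Arguments trunc {A} k _.

Fixpoint tsub A k : Tr A k -> (nat -> Tr A k) -> Tr A k :=
  match k return Tr A k -> (nat -> Tr A k) -> Tr A k with
  | 0 => fun _ _ => tt
  | S k => fun T r =>
      (fun u => exists v, T.1 v /\ (r v).1 u,
       fun a (X : Tr A k) => (exists T' : Tr A k, T.2 a T' /\ X = @tsub A k T' (fun v => @trunc A k (r v)))
                  \/ (exists v, T.1 v /\ (r v).2 a X))
  end.
Arguments tsub {A k} _ _.

Fixpoint den A k (x : Exp A) : Tr A k :=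
  match k return Tr A k with
  | 0 => tt
  | S k => (fun u => out x u, fun a (X : Tr A k) => exists x', step x a x' /\ X = @den A k x')
  end.
Arguments den {A} k _.


Lemma tsub1 A k (T : Tr A k.+1) r u :
  (tsub T r).1 u = exists v, T.1 v /\ (r v).1 u.
Proof. by []. Qed.
Lemma tsub2 A k (T : Tr A k.+1) r a X :
  (tsub T r).2 a X = ((exists T' : Tr A k, T.2 a T' /\ X = tsub T' (fun v => trunc k (r v)))
                  \/ (exists v, T.1 v /\ (r v).2 a X)).
Proof. by []. Qed.
Lemma trunc1 A k (T : Tr A k.+2) u : (trunc k.+1 T).1 u = T.1 u.
Proof. by []. Qed.
Lemma trunc2 A k (T : Tr A k.+2) a X :
  (trunc k.+1 T).2 a X = exists Y : Tr A k.+1, T.2 a Y /\ X = trunc k Y.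
Proof. by []. Qed.
Lemma den1 A k (x : Exp A) u : (den k.+1 x).1 u = out x u.
Proof. by []. Qed.
Lemma den2 A k (x : Exp A) a X :
  (den k.+1 x).2 a X = exists x', step x a x' /\ X = den k x'.
Proof. by []. Qed.
Ltac simp := rewrite ?tsub1 ?tsub2 ?trunc1 ?trunc2 ?den1 ?den2.
Lemma pair_ext A k (T1 T2 : Tr A k.+1) :
  (forall u, T1.1 u <-> T2.1 u) -> (forall a X, T1.2 a X <-> T2.2 a X) -> T1 = T2.
Proof.
case: T1 => O1 R1; case: T2 => O2 R2 /= H1 H2; f_equal.
- apply: functional_extensionality => u; exact: propositional_extensionality.
- apply: functional_extensionality => a; apply: functional_extensionality => X.
  exact: propositional_extensionality.
Qed.

Lemma Tr0 A (x y : Tr A 0) : x = y.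
Proof. by case: x; case: y. Qed.

Lemma trunc_den A k (x : Exp A) : trunc k (den k.+1 x) = den k x.
Proof.
elim: k x => [|k IH] x; first exact: Tr0.
apply: pair_ext => [u|a X]; simp => //; split.
- by case=> Y [[x' [H ->]] ->]; exists x'; rewrite IH.
- case=> x' [H ->]; exists (den k.+1 x'); split; first by exists x'.
  by rewrite IH.
Qed.

Lemma tsub_id A k (T : Tr A k) : tsub T (fun v => den k (Var v)) = T.
Proof.
elim: k T => [|k IH] T; first exact: Tr0.
have E : (fun v => trunc k (den k.+1 (@Var A v))) = (fun v => den k (Var v)).
  by apply: functional_extensionality => v; rewrite trunc_den.
apply: pair_ext; simp.
- move=> u; simp; split => [[v [H Hv]]|H]; first by move/out_inv: Hv => ->.
  exists u; split => //; constructor.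
- move=> a X; simp; rewrite E; split.
  + case=> [[T' [H ->]]|[v [_ [x' [Hs _]]]]]; first by rewrite IH.
    by have := step_inv Hs.
  + by move=> H; left; exists X; rewrite IH.
Qed.

Lemma trunc_tsub A k (T : Tr A k.+1) r :
  trunc k (tsub T r) = tsub (trunc k T) (fun v => trunc k (r v)).
Proof.
elim: k T r => [|k IH] T r; first exact: Tr0.
apply: pair_ext => [u|a X]; simp => //; split.
- case=> Y [[[T' [H ->]]|[v [Hv HY]]] ->].
  + by left; exists (trunc k T'); split; [exists T'|rewrite IH].
  + by right; exists v; split => //; exists Y.
- case=> [[T'' [[Y [HY ->]] ->]]|[v [Hv [Y [HY ->]]]]].
  + exists (tsub Y (fun v => trunc k.+1 (r v))); split; first by left; exists Y.
    by rewrite IH.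
  + by exists Y; split => //; right; exists v.
Qed.

Lemma tsub_comp A k (T : Tr A k) r1 r2 :
  tsub (tsub T r1) r2 = tsub T (fun v => tsub (r1 v) r2).
Proof.
elim: k T r1 r2 => [|k IH] T r1 r2; first exact: Tr0.
have Heq : forall T', tsub (tsub T' (fun v => trunc k (r1 v))) (fun v => trunc k (r2 v))
   = tsub T' (fun v => trunc k (tsub (r1 v) r2)).
  move=> T'; rewrite IH; congr tsub; apply: functional_extensionality => v.
  by rewrite trunc_tsub.
apply: pair_ext; simp.
- move=> u; simp; split.
  + by case=> v [[w [Hw Hv]] Hu]; exists w; split => //; exists v.
  + by case=> w [Hw [v [Hv Hu]]]; exists v; split => //; exists w.
- move=> a X; simp; split.
  + case=> [[T'' [[[T' [HR ->]]|[u [Hu HY]]] ->]]|[v [[u [Hu Hv]] HX]]].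
    * by left; exists T'; rewrite Heq.
    * by right; exists u; split => //; left; exists T''.
    * by right; exists u; split => //; right; exists v.
  + case=> [[T' [HR ->]]|[u [Hu [[Y [HY ->]]|[v [Hv HX]]]]]].
    * left; exists (tsub T' (fun v => trunc k (r1 v))); split; last by rewrite Heq.
      by left; exists T'.
    * by left; exists Y; split => //; right; exists u.
    * by right; exists v; split => //; exists u.
Qed.

Lemma den_fv A k (x : Exp A) rA rB :
  (forall v, v \in fv x -> rA v = rB v) -> tsub (den k x) rA = tsub (den k x) rB.
Proof.
elim: k x rA rB => [|k IH] x rA rB H; first exact: Tr0.
apply: pair_ext; simp.
- by move=> u; simp; split => -[v [Hv Hu]]; exists v; rewrite ?(H v (out_fv Hv)) // -(H v (out_fv Hv)).
- move=> a X; simp; split.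
  + case=> [[T' [[x' [Hs ->]] ->]]|[v [Hv HX]]].
    * left; exists (den k x'); split; first by exists x'.
      apply: IH => v Hv; rewrite H //; exact: (step_fv Hs).
    * by right; exists v; rewrite -(H v (out_fv Hv)).
  + case=> [[T' [[x' [Hs ->]] ->]]|[v [Hv HX]]].
    * left; exists (den k x'); split; first by exists x'.
      apply: IH => v Hv; rewrite H //; exact: (step_fv Hs).
    * by right; exists v; rewrite (H v (out_fv Hv)).
Qed.

Definition IHk (A : Type) (k : nat) := forall (s : nat -> Exp A) e,
  den k (subst s e) = tsub (den k e) (fun v => den k (s v)).

Lemma den_fresh A k (IH : IHk A k) z (M : Exp A) x : (forall u, u \in fv x -> u != z) ->
  den k (subst (subst1 z M) x) = den k x.
Proof.
move=> H; rewrite IH -{2}[den k x]tsub_id; apply: den_fv => v Hv.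
by rewrite /subst1 (negbTE (H v Hv)).
Qed.

Lemma K_lemma A k (IH : IHk A k) (s : nat -> Exp A) w e0 z e0' :
  (forall v, v \in fv e0 -> forall u, u \in fv (s v) -> u < z) ->
  subst s (Mu w e0) = Mu z (subst (fun u => if u == w then Var z else s u) e0) ->
  {subset fv e0' <= fv e0} ->
  den k (subst (subst1 z (Mu z (subst (fun u => if u == w then Var z else s u) e0)))
           (subst (fun u => if u == w then Var z else s u) e0'))
  = den k (subst s (subst (subst1 w (Mu w e0)) e0')).
Proof.
move=> Hz Heq Hsub.
rewrite IH IH IH IH !tsub_comp; apply: den_fv => v Hv.
rewrite -!IH /subst1.
case: (v =P w) => [E|vw].
- by subst v; rewrite /= eqxx -Heq.
- rewrite /=; apply: (den_fresh IH) => u Hu; apply/eqP => E.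
  have := Hz v (Hsub _ Hv) u Hu; by rewrite E ltnn.
Qed.

Lemma step_subst_char A k (IH : IHk A k) (e : Exp A) : forall s a X,
  (exists x, step (subst s e) a x /\ X = den k x) <->
  (exists e', step e a e' /\ X = den k (subst s e')) \/
  (exists v, out e v /\ exists y, step (s v) a y /\ X = den k y).
Proof.
elim: e => [|v|b e0 IHe|e1 IH1 e2 IH2|w e0 IHe] s a X.
- split => [[x [H _]]|[[e' [H _]]|[v [H _]]]].
  + by move: (step_inv H) => /=.
  + by move: (step_inv H).
  + by move: (out_inv H).
- split => [[x [Hs ->]]|[[e' [H _]]|[v' [H [y [Hy ->]]]]]].
  + by right; exists v; split; [constructor|exists x].
  + by move: (step_inv H).
  + by exists y; move: (out_inv H) => E; subst v'.
- split => [[x [H ->]]|[[e' [H ->]]|[v [H _]]]].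
  + move: (step_inv H) => /= [-> ->].
    by left; exists e0; split => //; constructor.
  + move: (step_inv H) => /= [-> ->].
    by exists (subst s e0); split => //; constructor.
  + by move: (out_inv H).
- split.
  + case=> x [H HX]; move: (step_inv H) => /= [Hs|Hs].
    * case: (proj1 (IH1 s a X) (ex_intro _ x (conj Hs HX))) =>
        [[e' [He' HX']]|[v [Hv Hy]]].
        by left; exists e'; split => //; apply: st_plusl.
        by right; exists v; split => //; apply: out_plusl.
    * case: (proj1 (IH2 s a X) (ex_intro _ x (conj Hs HX))) =>
        [[e' [He' HX']]|[v [Hv Hy]]].
        by left; exists e'; split => //; apply: st_plusr.
        by right; exists v; split => //; apply: out_plusr.
  + case=> [[e' [H HX]]|[v [H Hy]]];
      [move: (step_inv H) => /= [Hs|Hs]|move: (out_inv H) => /= [Hv|Hv]].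
    * have [x [Hx HX']] : exists x, step (subst s e1) a x /\ X = den k x.
        by apply/IH1; left; exists e'.
      by exists x; split => //; apply: st_plusl.
    * have [x [Hx HX']] : exists x, step (subst s e2) a x /\ X = den k x.
        by apply/IH2; left; exists e'.
      by exists x; split => //; apply: st_plusr.
    * have [x [Hx HX']] : exists x, step (subst s e1) a x /\ X = den k x.
        by apply/IH1; right; exists v.
      by exists x; split => //; apply: st_plusl.
    * have [x [Hx HX']] : exists x, step (subst s e2) a x /\ X = den k x.
        by apply/IH2; right; exists v.
      by exists x; split => //; apply: st_plusr.
- have [z [Heq Hz]] := subst_Mu s w e0.
  set s' := (fun u => if u == w then Var z else s u) in Heq.
  set M := Mu z (subst s' e0).
  have Efr : forall v y a', v \in fv e0 -> v != w -> step (s v) a' y ->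
      den k (subst (subst1 z M) y) = den k y.
    move=> v y a' Hv vw Hy; apply: (den_fresh IH) => u Hu; apply/eqP => E.
    have := Hz v Hv u (step_fv Hy Hu); by rewrite E ltnn.
  rewrite Heq; split.
  + case=> x [H ->]; move: (step_inv H) => /= [x' [Hx' ->]].
    case: (proj1 (IHe s' a (den k x')) (ex_intro _ x' (conj Hx' erefl))) =>
      [[e0' [He0' HX']]|[v [Hv [y [Hy HX']]]]].
    * left; exists (subst (subst1 w (Mu w e0)) e0'); split; first by constructor.
      rewrite IH HX' -IH; apply: (K_lemma IH) => //; exact: step_fv He0'.
    * move: Hy; rewrite /s' /=; case: (v =P w) => [_ H0|/eqP vw Hy]; first by move: (step_inv H0).
      right; exists v; split; first by apply: out_mu => //; apply/eqP.
      exists y; split => //; rewrite IH HX' -IH; exact: (Efr _ _ _ (out_fv Hv) vw Hy).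
  + case=> [[e' [H ->]]|[v [H [y [Hy ->]]]]];
      [move: (step_inv H) => /= [e0' [He0' ->]]|move: (out_inv H) => /= [Hv /eqP vw]].
    * have [x' [Hx' HX']] : exists x', step (subst s' e0) a x' /\ den k (subst s' e0') = den k x'.
        by apply/IHe; left; exists e0'.
      exists (subst (subst1 z M) x'); split; first by constructor.
      rewrite (IH _ x') -HX' -IH; symmetry; exact: (K_lemma IH) Hz Heq (step_fv He0').
    * have [x' [Hx' HX']] : exists x', step (subst s' e0) a x' /\ den k y = den k x'.
        apply/IHe; right; exists v; split => //; exists y; split => //.
        by rewrite /s' (negbTE vw).
      exists (subst (subst1 z M) x'); split; first by constructor.
      rewrite IH -HX' -IH; symmetry; exact: (Efr _ _ _ (out_fv Hv) vw Hy).
Qed.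

Lemma den_subst A k (s : nat -> Exp A) e :
  den k (subst s e) = tsub (den k e) (fun v => den k (s v)).
Proof.
elim: k s e => [|k IH] s e; first exact: Tr0.
apply: pair_ext => [u|a X]; simp.
- exact: out_subst.
- rewrite (step_subst_char IH e s a X); split.
  + case=> [[e' [He ->]]|H]; last by right.
    left; exists (den k e'); split; first by exists e'.
    rewrite IH; congr tsub; apply: functional_extensionality => v.
    by rewrite trunc_den.
  + case=> [[T' [[e' [He ->]] ->]]|H]; last by right.
    left; exists e'; split => //; rewrite IH; congr tsub.
    apply: functional_extensionality => v; by rewrite trunc_den.
Qed.

Lemma bisim_refl A (x : Exp A) : bisim x x.
Proof.
exists eq; split => // e f <-; split => //; split=> a e' H; by exists e'.
Qed.

Lemma bisim_sym A (x y : Exp A) : bisim x y -> bisim y x.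
Proof.
case=> R [HR Hxy]; exists (fun a b => R b a); split => // e f Hfe.
case: (HR _ _ Hfe) => Ho [Hf Hb]; split; first by move=> v; split => /Ho.
by split.
Qed.

Lemma bisim_out A (x y : Exp A) v : bisim x y -> out x v -> out y v.
Proof. by case=> R [HR Hxy]; case: (HR _ _ Hxy) => Ho _ /Ho. Qed.

Lemma bisim_step A (x y : Exp A) a x' : bisim x y -> step x a x' ->
  exists y', step y a y' /\ bisim x' y'.
Proof.
case=> R [HR Hxy] Hs; case: (HR _ _ Hxy) => _ [Hf _].
case: (Hf _ _ Hs) => y' [Hy' HR']; exists y'; split => //; by exists R.
Qed.

Lemma bisim_den A k (x y : Exp A) : bisim x y -> den k x = den k y.
Proof.
elim: k x y => [|k IH] x y Hxy; first exact: Tr0.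
apply: pair_ext => [u|a X]; simp.
- split; [exact: bisim_out|apply: bisim_out; exact: bisim_sym].
- split => -[x' [Hs ->]].
  + case: (bisim_step Hxy Hs) => y' [Hy' B]; exists y'; split => //; exact: IH.
  + case: (bisim_step (bisim_sym Hxy) Hs) => y' [Hy' B]; exists y'; split => //.
    exact: IH.
Qed.

Lemma qout_out A (x : Exp A) v : qout x v <-> out x v.
Proof.
split => [[x' [B H]]|H]; last by exists x; split => //; exact: bisim_refl.
apply: bisim_out H; exact: bisim_sym.
Qed.

Lemma qstep_den A (x : Exp A) a x' : qstep x a x' ->
  exists x'', step x a x'' /\ forall j, den j x'' = den j x'.
Proof.
case=> x1 [x2 [B1 [B2 Hs]]].
case: (bisim_step (bisim_sym B1) Hs) => x3 [Hx3 B3].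
exists x3; split => // j; rewrite -(bisim_den j B3); symmetry; exact: bisim_den.
Qed.

Lemma step_qstep A (x : Exp A) a x' : step x a x' -> qstep x a x'.
Proof. by move=> H; exists x, x'; split; [|split] => //; exact: bisim_refl. Qed.

Lemma strat_den A k (x y : Exp A) : strat k x y <-> den k x = den k y.
Proof.
elim: k x y => [|k IH] x y; first by split => // _; exact: Tr0.
split.
- case=> Ho [Hf Hb]; apply: pair_ext => [u|a X]; simp.
  + by rewrite -!qout_out.
  + split => -[x' [Hs ->]].
    * case: (Hf _ _ (step_qstep Hs)) => y' [Q S].
      case: (qstep_den Q) => y'' [Hy'' E].
      by exists y''; rewrite E -(proj1 (IH _ _) S).
    * case: (Hb _ _ (step_qstep Hs)) => y' [Q S].
      case: (qstep_den Q) => y'' [Hy'' E].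
      by exists y''; rewrite E -(proj1 (IH _ _) S).
- move=> E.
  have Eo : forall u, out x u <-> out y u.
    move=> u; have := f_equal (fun T : Tr A k.+1 => T.1 u) E; simp => ->; done.
  have Es : forall a X, (exists x', step x a x' /\ X = den k x') <->
                        (exists y', step y a y' /\ X = den k y').
    move=> a X; have := f_equal (fun T : Tr A k.+1 => T.2 a X) E; simp => ->; done.
  split; first by move=> v; rewrite !qout_out.
  split.
  + move=> a x' Q; case: (qstep_den Q) => x'' [Hs Ex].
    case: (proj1 (Es a (den k x'')) (ex_intro _ x'' (conj Hs erefl))) => y' [Hy' Ey].
    exists y'; split; first exact: step_qstep.
    by apply/IH; rewrite -Ey Ex.
  + move=> a y' Q; case: (qstep_den Q) => y'' [Hs Ey].
    case: (proj2 (Es a (den k y'')) (ex_intro _ y'' (conj Hs erefl))) => x' [Hx' Ex].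
    exists x'; split; first exact: step_qstep.
    by apply/IH; rewrite -Ex Ey.
Qed.

Theorem mainTheorem11 (A : Type) (m : nat) (i : 'I_m -> nat)
    (i_distinct : injective i) (n : nat) (e f : Exp A)
    (g h : 'I_m -> Exp A) :
  strat n e f ->
  (forall j : 'I_m, strat n (g j) (h j)) ->
  strat n (subst (substm i g) e) (subst (substm i h) f).
Proof.
move=> /strat_den Hef Hgh; apply/strat_den.
rewrite !den_subst Hef; congr tsub; apply: functional_extensionality => u.
rewrite /substm; case: pickP => [j _|_] //; exact/strat_den.
Qed.
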